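(* Let $$D_6=\begin{bmatrix}1&1&1&1&1&1\\1&-1&\mathrm{i}&-\mathrm{i}&-\mathrm{i}&\mathrm{i}\\1&\mathrm{i}&-1&\mathrm{i}&-\mathrm{i}&-\mathrm{i}\\1&-\mathrm{i}&\mathrm{i}&-1&\mathrm{i}&-\mathrm{i}\\1&-\mathrm{i}&-\mathrm{i}&\mathrm{i}&-1&\mathrm{i}\\1&\mathrm{i}&-\mathrm{i}&-\mathrm{i}&\mathrm{i}&-1\end{bmatrix},$$ and for $c\in\mathbb{R}$ let $R(c)\in M^{6\times 6}(\mathbb{R})$ be the matrix with $[R(c)]_{3,4}=[R(c)]_{3,5}=[R(c)]_{6,4}=[R(c)]_{6,5}=c$, $[R(c)]_{4,3}=[R(c)]_{4,6}=[R(c)]_{5,3}=[R(c)]_{5,6}=-c$, and all other entries $0$. Let $D_6^{(1)}(c)=D_6\circ \mathrm{EXP}(\mathrm{i}R(c))$, which is a complex Hadamard matrix for every $c\in\mathbb{R}$. Then $d\big(D_6^{(1)}(c)\big)=4$ for every $c\in\mathbb{R}$.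
   Context: $\circ$ denotes the entrywise (Hadamard) product and $[\mathrm{EXP}(\mathrm{i}R)]_{j,k}=e^{\mathrm{i}[R]_{j,k}}$. A complex Hadamard matrix of order $d$ is $H\in M^{d\times d}(\mathbb{C})$ with all entries of modulus $1$ and $HH^*=dI_d$. The defect $d(H)$ of a $d\times d$ complex Hadamard matrix $H$ is the dimension of the real vector space of matrices $R\in M^{d\times d}(\mathbb{R})$ satisfying: $[R]_{i,1}=0$ for $1\le i\le d$; $[R]_{1,j}=0$ for $2\le j\le d$; and $\sum_{k=1}^d [H]_{i,k}\overline{[H]_{j,k}}\big([R]_{i,k}-[R]_{j,k}\big)=0$ for all $1\le i<j\le d$. *)

(* Defs.v *)
From HB Require Import structures.
From mathcomp Require Import all_boot all_order all_algebra.
From mathcomp Require Import reals trigo.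
From mathcomp Require Import complex.
Set Implicit Arguments. Unset Strict Implicit. Unset Printing Implicit Defensive.
Import Order.TTheory GRing.Theory Num.Theory.
Local Open Scope ring_scope.
Local Open Scope complex_scope.

Section Defs.
Variable R : realType.
Local Notation C := R[i].

Definition expi (x : R) : C := (cos x) +i* (sin x).

Definition hadamard_exp (d : nat) (H : 'M[C]_d) (X : 'M[R]_d) : 'M[C]_d :=
  \matrix_(j, k) (H j k * expi (X j k)).

Definition complex_hadamard (d : nat) (H : 'M[C]_d) : Prop :=
  (forall j k, `|H j k| = 1) /\ H *m (map_mx Num.conj H)^T = (d%:R)%:M.

(* The defining conditions of the defect space (indices 0-based:
   paper's index 1 is ord 0). *)
Definition defect_cond (d : nat) (H : 'M[C]_d) (X : 'M[R]_d) : Prop :=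
  (forall i k : 'I_d, nat_of_ord k = 0%N -> X i k = 0) /\
  (forall i j : 'I_d, nat_of_ord i = 0%N -> (1 <= j)%N -> X i j = 0) /\
  (forall i j : 'I_d, (i < j)%N ->
     \sum_(k < d) H i k * Num.conj (H j k) * ((X i k - X j k)%:C) = 0).

(* d(H) = n : the real vector space of solutions has dimension n,
   i.e. it has a basis (free spanning family) of n matrices. *)
Definition has_defect (d : nat) (H : 'M[C]_d) (n : nat) : Prop :=
  exists b : n.-tuple 'M[R]_d,
    free b /\ (forall X : 'M[R]_d, defect_cond H X <-> X \in <<b>>%VS).

Definition D6_list : seq (seq C) :=
  [:: [:: 1; 1; 1; 1; 1; 1];
      [:: 1; -1; 'i; -'i; -'i; 'i];
      [:: 1; 'i; -1; 'i; -'i; -'i];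
      [:: 1; -'i; 'i; -1; 'i; -'i];
      [:: 1; -'i; -'i; 'i; -1; 'i];
      [:: 1; 'i; -'i; -'i; 'i; -1]].

Definition D6 : 'M[C]_6 :=
  \matrix_(j, k) nth 0 (nth [::] D6_list j) k.

(* R(c), with 0-based indices: paper's (3,4) is (2,3), etc. *)
Definition Rc_list (c : R) : seq (seq R) :=
  [:: [:: 0; 0; 0; 0; 0; 0];
      [:: 0; 0; 0; 0; 0; 0];
      [:: 0; 0; 0; c; c; 0];
      [:: 0; 0; -c; 0; 0; -c];
      [:: 0; 0; -c; 0; 0; -c];
      [:: 0; 0; 0; c; c; 0]].

Definition Rc (c : R) : 'M[R]_6 :=
  \matrix_(j, k) nth 0 (nth [::] (Rc_list c) j) k.

Definition D6_1 (c : R) : 'M[C]_6 := hadamard_exp D6 (Rc c).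

End Defs.

(* Main.v *)
Require Import Defs.
From HB Require Import structures.
From mathcomp Require Import all_boot all_order all_algebra.
From mathcomp Require Import reals trigo complex.
From mathcomp Require Import ring lra.
Set Implicit Arguments. Unset Strict Implicit. Unset Printing Implicit Defensive.
Import Order.TTheory GRing.Theory Num.Theory.
Local Open Scope ring_scope.

Section Work.
Variable R : realType.
Variable c : R.
Local Notation co := (cos c).
Local Notation si := (sin c).
Local Open Scope complex_scope.

Lemma conjE (a b : R) : Num.conj (a +i* b) = a -i* b.
Proof.
have -> : a +i* b = a%:C + 'i%R * b%:C by simpc.
rewrite conjC_rect ?complex_real //.
by rewrite -complexiE; simpc.
Qed.

Lemma complex_eq0 (a b : R) : (a +i* b = 0) <-> (a = 0 /\ b = 0).
Proof. by split; [case=> -> -> | case=> -> ->]. Qed.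

Lemma sum_complex (n : nat) (f g : 'I_n -> R) :
  \sum_(k < n) (f k +i* g k) = (\sum_(k < n) f k) +i* (\sum_(k < n) g k).
Proof.
apply: (big_ind3 (fun a b c => a = b +i* c)) => //.
by move=> a b1 b2 d e1 e2 -> ->; simpc.
Qed.

Local Close Scope complex_scope.

Definition Hre_list : seq (seq R) :=
  [:: [:: (1); (1); (1); (1); (1); (1)];
    [:: (1); (- 1); 0; 0; 0; 0];
    [:: (1); 0; (- 1); (- si); (si); 0];
    [:: (1); 0; (si); (- 1); 0; (- si)];
    [:: (1); 0; (- si); 0; (- 1); (si)];
    [:: (1); 0; 0; (si); (- si); (- 1)]].
Definition Him_list : seq (seq R) :=
  [:: [:: 0; 0; 0; 0; 0; 0];
    [:: 0; 0; (1); (- 1); (- 1); (1)];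
    [:: 0; (1); 0; (co); (- co); (- 1)];
    [:: 0; (- 1); (co); 0; (1); (- co)];
    [:: 0; (- 1); (- co); (1); 0; (co)];
    [:: 0; (1); (- 1); (- co); (co); 0]].
Definition Hre (j k : nat) : R := nth 0 (nth [::] Hre_list j) k.
Definition Him (j k : nat) : R := nth 0 (nth [::] Him_list j) k.

Lemma Hentry (j k : 'I_6) : D6_1 c j k = (Hre j k +i* Him j k)%C.
Proof.
rewrite /D6_1 /hadamard_exp /D6 /Rc !mxE.
case: j => [[|[|[|[|[|[|j]]]]]] Hj] //; case: k => [[|[|[|[|[|[|k]]]]]] Hk] //;
  rewrite /Hre /Him /expi /= ?cosN ?sinN ?cos0 ?sin0; simpc;
  (by []) || (congr (_ +i* _)%C; ring).
Qed.

Lemma circ_eq (P Q L : R) : P - Q = (co ^+ 2 + si ^+ 2 - 1) * L -> P = Q.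
Proof. by rewrite cos2Dsin2 subrr mul0r => /eqP; rewrite subr_eq0 => /eqP. Qed.

Definition ReS (X : 'M[R]_6) (i j : 'I_6) : R :=
  \sum_(k < 6) (Hre i k * Hre j k + Him i k * Him j k) * (X i k - X j k).
Definition ImS (X : 'M[R]_6) (i j : 'I_6) : R :=
  \sum_(k < 6) (Him i k * Hre j k - Hre i k * Him j k) * (X i k - X j k).

Lemma pair_sum (X : 'M[R]_6) (i j : 'I_6) :
  \sum_(k < 6) D6_1 c i k * Num.conj (D6_1 c j k) * ((X i k - X j k)%:C)%C
  = (ReS X i j +i* ImS X i j)%C.
Proof.
rewrite /ReS /ImS -sum_complex; apply: eq_bigr => k _.
rewrite !Hentry conjE -complexr0; simpc; congr (_ +i* _)%C; ring.
Qed.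

Lemma defect_iff (X : 'M[R]_6) : defect_cond (D6_1 c) X <->
  [/\ (forall i k : 'I_6, nat_of_ord k = 0%N -> X i k = 0),
      (forall i j : 'I_6, nat_of_ord i = 0%N -> (1 <= j)%N -> X i j = 0) &
      (forall i j : 'I_6, (i < j)%N -> ReS X i j = 0 /\ ImS X i j = 0)].
Proof.
split=> [[h1 [h2 h3]] | [h1 h2 h3]].
  by split=> // i j /h3; rewrite pair_sum complex_eq0.
by split=> //; split=> // i j /h3; rewrite pair_sum complex_eq0.
Qed.

Lemma sum6 (V : zmodType) (F : 'I_6 -> V) :
  \sum_(k < 6) F k = F (inord 0) + F (inord 1) + F (inord 2) + F (inord 3) + F (inord 4) + F (inord 5).
Proof.
rewrite !big_ord_recl big_ord0 addr0 !addrA.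
by repeat congr (_ + _); congr F; apply/val_inj; rewrite /= inordK.
Qed.

Lemma eq_01 (X : 'M[R]_6) : ReS X (inord 0) (inord 1) = (1) * (X (inord 0) (inord 0) - X (inord 1) (inord 0)) + (- 1) * (X (inord 0) (inord 1) - X (inord 1) (inord 1)) /\ ImS X (inord 0) (inord 1) = (- 1) * (X (inord 0) (inord 2) - X (inord 1) (inord 2)) + (1) * (X (inord 0) (inord 3) - X (inord 1) (inord 3)) + (1) * (X (inord 0) (inord 4) - X (inord 1) (inord 4)) + (- 1) * (X (inord 0) (inord 5) - X (inord 1) (inord 5)).
Proof.
rewrite /ReS /ImS !sum6 /Hre /Him !inordK //=; split.
  by apply: (circ_eq (L := 0)); ring.
by apply: (circ_eq (L := 0)); ring.
Qed.

Lemma eq_02 (X : 'M[R]_6) : ReS X (inord 0) (inord 2) = (1) * (X (inord 0) (inord 0) - X (inord 2) (inord 0)) + (- 1) * (X (inord 0) (inord 2) - X (inord 2) (inord 2)) + (- si) * (X (inord 0) (inord 3) - X (inord 2) (inord 3)) + (si) * (X (inord 0) (inord 4) - X (inord 2) (inord 4)) /\ ImS X (inord 0) (inord 2) = (- 1) * (X (inord 0) (inord 1) - X (inord 2) (inord 1)) + (- co) * (X (inord 0) (inord 3) - X (inord 2) (inord 3)) + (co) * (X (inord 0) (inord 4) - X (inord 2) (inord 4)) + (1) * (X (inord 0) (inord 5) - X (inord 2) (inord 5)).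
Proof.
rewrite /ReS /ImS !sum6 /Hre /Him !inordK //=; split.
  by apply: (circ_eq (L := 0)); ring.
by apply: (circ_eq (L := 0)); ring.
Qed.

Lemma eq_03 (X : 'M[R]_6) : ReS X (inord 0) (inord 3) = (1) * (X (inord 0) (inord 0) - X (inord 3) (inord 0)) + (si) * (X (inord 0) (inord 2) - X (inord 3) (inord 2)) + (- 1) * (X (inord 0) (inord 3) - X (inord 3) (inord 3)) + (- si) * (X (inord 0) (inord 5) - X (inord 3) (inord 5)) /\ ImS X (inord 0) (inord 3) = (1) * (X (inord 0) (inord 1) - X (inord 3) (inord 1)) + (- co) * (X (inord 0) (inord 2) - X (inord 3) (inord 2)) + (- 1) * (X (inord 0) (inord 4) - X (inord 3) (inord 4)) + (co) * (X (inord 0) (inord 5) - X (inord 3) (inord 5)).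
Proof.
rewrite /ReS /ImS !sum6 /Hre /Him !inordK //=; split.
  by apply: (circ_eq (L := 0)); ring.
by apply: (circ_eq (L := 0)); ring.
Qed.

Lemma eq_04 (X : 'M[R]_6) : ReS X (inord 0) (inord 4) = (1) * (X (inord 0) (inord 0) - X (inord 4) (inord 0)) + (- si) * (X (inord 0) (inord 2) - X (inord 4) (inord 2)) + (- 1) * (X (inord 0) (inord 4) - X (inord 4) (inord 4)) + (si) * (X (inord 0) (inord 5) - X (inord 4) (inord 5)) /\ ImS X (inord 0) (inord 4) = (1) * (X (inord 0) (inord 1) - X (inord 4) (inord 1)) + (co) * (X (inord 0) (inord 2) - X (inord 4) (inord 2)) + (- 1) * (X (inord 0) (inord 3) - X (inord 4) (inord 3)) + (- co) * (X (inord 0) (inord 5) - X (inord 4) (inord 5)).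
Proof.
rewrite /ReS /ImS !sum6 /Hre /Him !inordK //=; split.
  by apply: (circ_eq (L := 0)); ring.
by apply: (circ_eq (L := 0)); ring.
Qed.

Lemma eq_05 (X : 'M[R]_6) : ReS X (inord 0) (inord 5) = (1) * (X (inord 0) (inord 0) - X (inord 5) (inord 0)) + (si) * (X (inord 0) (inord 3) - X (inord 5) (inord 3)) + (- si) * (X (inord 0) (inord 4) - X (inord 5) (inord 4)) + (- 1) * (X (inord 0) (inord 5) - X (inord 5) (inord 5)) /\ ImS X (inord 0) (inord 5) = (- 1) * (X (inord 0) (inord 1) - X (inord 5) (inord 1)) + (1) * (X (inord 0) (inord 2) - X (inord 5) (inord 2)) + (co) * (X (inord 0) (inord 3) - X (inord 5) (inord 3)) + (- co) * (X (inord 0) (inord 4) - X (inord 5) (inord 4)).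
Proof.
rewrite /ReS /ImS !sum6 /Hre /Him !inordK //=; split.
  by apply: (circ_eq (L := 0)); ring.
by apply: (circ_eq (L := 0)); ring.
Qed.

Lemma eq_12 (X : 'M[R]_6) : ReS X (inord 1) (inord 2) = (1) * (X (inord 1) (inord 0) - X (inord 2) (inord 0)) + (- co) * (X (inord 1) (inord 3) - X (inord 2) (inord 3)) + (co) * (X (inord 1) (inord 4) - X (inord 2) (inord 4)) + (- 1) * (X (inord 1) (inord 5) - X (inord 2) (inord 5)) /\ ImS X (inord 1) (inord 2) = (1) * (X (inord 1) (inord 1) - X (inord 2) (inord 1)) + (- 1) * (X (inord 1) (inord 2) - X (inord 2) (inord 2)) + (si) * (X (inord 1) (inord 3) - X (inord 2) (inord 3)) + (- si) * (X (inord 1) (inord 4) - X (inord 2) (inord 4)).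
Proof.
rewrite /ReS /ImS !sum6 /Hre /Him !inordK //=; split.
  by apply: (circ_eq (L := 0)); ring.
by apply: (circ_eq (L := 0)); ring.
Qed.

Lemma eq_13 (X : 'M[R]_6) : ReS X (inord 1) (inord 3) = (1) * (X (inord 1) (inord 0) - X (inord 3) (inord 0)) + (co) * (X (inord 1) (inord 2) - X (inord 3) (inord 2)) + (- 1) * (X (inord 1) (inord 4) - X (inord 3) (inord 4)) + (- co) * (X (inord 1) (inord 5) - X (inord 3) (inord 5)) /\ ImS X (inord 1) (inord 3) = (- 1) * (X (inord 1) (inord 1) - X (inord 3) (inord 1)) + (si) * (X (inord 1) (inord 2) - X (inord 3) (inord 2)) + (1) * (X (inord 1) (inord 3) - X (inord 3) (inord 3)) + (- si) * (X (inord 1) (inord 5) - X (inord 3) (inord 5)).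
Proof.
rewrite /ReS /ImS !sum6 /Hre /Him !inordK //=; split.
  by apply: (circ_eq (L := 0)); ring.
by apply: (circ_eq (L := 0)); ring.
Qed.

Lemma eq_14 (X : 'M[R]_6) : ReS X (inord 1) (inord 4) = (1) * (X (inord 1) (inord 0) - X (inord 4) (inord 0)) + (- co) * (X (inord 1) (inord 2) - X (inord 4) (inord 2)) + (- 1) * (X (inord 1) (inord 3) - X (inord 4) (inord 3)) + (co) * (X (inord 1) (inord 5) - X (inord 4) (inord 5)) /\ ImS X (inord 1) (inord 4) = (- 1) * (X (inord 1) (inord 1) - X (inord 4) (inord 1)) + (- si) * (X (inord 1) (inord 2) - X (inord 4) (inord 2)) + (1) * (X (inord 1) (inord 4) - X (inord 4) (inord 4)) + (si) * (X (inord 1) (inord 5) - X (inord 4) (inord 5)).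
Proof.
rewrite /ReS /ImS !sum6 /Hre /Him !inordK //=; split.
  by apply: (circ_eq (L := 0)); ring.
by apply: (circ_eq (L := 0)); ring.
Qed.

Lemma eq_15 (X : 'M[R]_6) : ReS X (inord 1) (inord 5) = (1) * (X (inord 1) (inord 0) - X (inord 5) (inord 0)) + (- 1) * (X (inord 1) (inord 2) - X (inord 5) (inord 2)) + (co) * (X (inord 1) (inord 3) - X (inord 5) (inord 3)) + (- co) * (X (inord 1) (inord 4) - X (inord 5) (inord 4)) /\ ImS X (inord 1) (inord 5) = (1) * (X (inord 1) (inord 1) - X (inord 5) (inord 1)) + (- si) * (X (inord 1) (inord 3) - X (inord 5) (inord 3)) + (si) * (X (inord 1) (inord 4) - X (inord 5) (inord 4)) + (- 1) * (X (inord 1) (inord 5) - X (inord 5) (inord 5)).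
Proof.
rewrite /ReS /ImS !sum6 /Hre /Him !inordK //=; split.
  by apply: (circ_eq (L := 0)); ring.
by apply: (circ_eq (L := 0)); ring.
Qed.

Lemma eq_23 (X : 'M[R]_6) : ReS X (inord 2) (inord 3) = (1) * (X (inord 2) (inord 0) - X (inord 3) (inord 0)) + (- 1) * (X (inord 2) (inord 1) - X (inord 3) (inord 1)) + (- si) * (X (inord 2) (inord 2) - X (inord 3) (inord 2)) + (si) * (X (inord 2) (inord 3) - X (inord 3) (inord 3)) + (- co) * (X (inord 2) (inord 4) - X (inord 3) (inord 4)) + (co) * (X (inord 2) (inord 5) - X (inord 3) (inord 5)) /\ ImS X (inord 2) (inord 3) = (co) * (X (inord 2) (inord 2) - X (inord 3) (inord 2)) + (- co) * (X (inord 2) (inord 3) - X (inord 3) (inord 3)) + (- si) * (X (inord 2) (inord 4) - X (inord 3) (inord 4)) + (si) * (X (inord 2) (inord 5) - X (inord 3) (inord 5)).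
Proof.
rewrite /ReS /ImS !sum6 /Hre /Him !inordK //=; split.
  by apply: (circ_eq (L := 0)); ring.
by apply: (circ_eq (L := 0)); ring.
Qed.

Lemma eq_24 (X : 'M[R]_6) : ReS X (inord 2) (inord 4) = (1) * (X (inord 2) (inord 0) - X (inord 4) (inord 0)) + (- 1) * (X (inord 2) (inord 1) - X (inord 4) (inord 1)) + (si) * (X (inord 2) (inord 2) - X (inord 4) (inord 2)) + (co) * (X (inord 2) (inord 3) - X (inord 4) (inord 3)) + (- si) * (X (inord 2) (inord 4) - X (inord 4) (inord 4)) + (- co) * (X (inord 2) (inord 5) - X (inord 4) (inord 5)) /\ ImS X (inord 2) (inord 4) = (- co) * (X (inord 2) (inord 2) - X (inord 4) (inord 2)) + (si) * (X (inord 2) (inord 3) - X (inord 4) (inord 3)) + (co) * (X (inord 2) (inord 4) - X (inord 4) (inord 4)) + (- si) * (X (inord 2) (inord 5) - X (inord 4) (inord 5)).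
Proof.
rewrite /ReS /ImS !sum6 /Hre /Him !inordK //=; split.
  by apply: (circ_eq (L := 0)); ring.
by apply: (circ_eq (L := 0)); ring.
Qed.

Lemma eq_25 (X : 'M[R]_6) : ReS X (inord 2) (inord 5) = (1) * (X (inord 2) (inord 0) - X (inord 5) (inord 0)) + (1) * (X (inord 2) (inord 1) - X (inord 5) (inord 1)) + (- 1) * (X (inord 2) (inord 3) - X (inord 5) (inord 3)) + (- 1) * (X (inord 2) (inord 4) - X (inord 5) (inord 4)) /\ ImS X (inord 2) (inord 5) = (- 1) * (X (inord 2) (inord 2) - X (inord 5) (inord 2)) + (1) * (X (inord 2) (inord 5) - X (inord 5) (inord 5)).
Proof.
rewrite /ReS /ImS !sum6 /Hre /Him !inordK //=; split.
  by apply: (circ_eq (L := (- 1) * (X (inord 2) (inord 3) - X (inord 5) (inord 3)) + (- 1) * (X (inord 2) (inord 4) - X (inord 5) (inord 4)))); ring.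
by apply: (circ_eq (L := 0)); ring.
Qed.

Lemma eq_34 (X : 'M[R]_6) : ReS X (inord 3) (inord 4) = (1) * (X (inord 3) (inord 0) - X (inord 4) (inord 0)) + (1) * (X (inord 3) (inord 1) - X (inord 4) (inord 1)) + (- 1) * (X (inord 3) (inord 2) - X (inord 4) (inord 2)) + (- 1) * (X (inord 3) (inord 5) - X (inord 4) (inord 5)) /\ ImS X (inord 3) (inord 4) = (1) * (X (inord 3) (inord 3) - X (inord 4) (inord 3)) + (- 1) * (X (inord 3) (inord 4) - X (inord 4) (inord 4)).
Proof.
rewrite /ReS /ImS !sum6 /Hre /Him !inordK //=; split.
  by apply: (circ_eq (L := (- 1) * (X (inord 3) (inord 2) - X (inord 4) (inord 2)) + (- 1) * (X (inord 3) (inord 5) - X (inord 4) (inord 5)))); ring.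
by apply: (circ_eq (L := 0)); ring.
Qed.

Lemma eq_35 (X : 'M[R]_6) : ReS X (inord 3) (inord 5) = (1) * (X (inord 3) (inord 0) - X (inord 5) (inord 0)) + (- 1) * (X (inord 3) (inord 1) - X (inord 5) (inord 1)) + (- co) * (X (inord 3) (inord 2) - X (inord 5) (inord 2)) + (- si) * (X (inord 3) (inord 3) - X (inord 5) (inord 3)) + (co) * (X (inord 3) (inord 4) - X (inord 5) (inord 4)) + (si) * (X (inord 3) (inord 5) - X (inord 5) (inord 5)) /\ ImS X (inord 3) (inord 5) = (si) * (X (inord 3) (inord 2) - X (inord 5) (inord 2)) + (- co) * (X (inord 3) (inord 3) - X (inord 5) (inord 3)) + (- si) * (X (inord 3) (inord 4) - X (inord 5) (inord 4)) + (co) * (X (inord 3) (inord 5) - X (inord 5) (inord 5)).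
Proof.
rewrite /ReS /ImS !sum6 /Hre /Him !inordK //=; split.
  by apply: (circ_eq (L := 0)); ring.
by apply: (circ_eq (L := 0)); ring.
Qed.

Lemma eq_45 (X : 'M[R]_6) : ReS X (inord 4) (inord 5) = (1) * (X (inord 4) (inord 0) - X (inord 5) (inord 0)) + (- 1) * (X (inord 4) (inord 1) - X (inord 5) (inord 1)) + (co) * (X (inord 4) (inord 2) - X (inord 5) (inord 2)) + (- co) * (X (inord 4) (inord 3) - X (inord 5) (inord 3)) + (si) * (X (inord 4) (inord 4) - X (inord 5) (inord 4)) + (- si) * (X (inord 4) (inord 5) - X (inord 5) (inord 5)) /\ ImS X (inord 4) (inord 5) = (- si) * (X (inord 4) (inord 2) - X (inord 5) (inord 2)) + (si) * (X (inord 4) (inord 3) - X (inord 5) (inord 3)) + (co) * (X (inord 4) (inord 4) - X (inord 5) (inord 4)) + (- co) * (X (inord 4) (inord 5) - X (inord 5) (inord 5)).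
Proof.
rewrite /ReS /ImS !sum6 /Hre /Him !inordK //=; split.
  by apply: (circ_eq (L := 0)); ring.
by apply: (circ_eq (L := 0)); ring.
Qed.

Lemma ordE (n a : nat) (Ha : (a < n.+1)%N) : Ordinal Ha = inord a.
Proof. by apply/val_inj; rewrite /= inordK. Qed.

Lemma all_pairs (P : 'I_6 -> 'I_6 -> Prop) :
  P (inord 0) (inord 1) ->
  P (inord 0) (inord 2) ->
  P (inord 0) (inord 3) ->
  P (inord 0) (inord 4) ->
  P (inord 0) (inord 5) ->
  P (inord 1) (inord 2) ->
  P (inord 1) (inord 3) ->
  P (inord 1) (inord 4) ->
  P (inord 1) (inord 5) ->
  P (inord 2) (inord 3) ->
  P (inord 2) (inord 4) ->
  P (inord 2) (inord 5) ->
  P (inord 3) (inord 4) ->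
  P (inord 3) (inord 5) ->
  P (inord 4) (inord 5) ->
  forall i j : 'I_6, (i < j)%N -> P i j.
Proof.
move=> h01 h02 h03 h04 h05 h12 h13 h14 h15 h23 h24 h25 h34 h35 h45 [[|[|[|[|[|[|i]]]]]] Hi] //
  [[|[|[|[|[|[|j]]]]]] Hj] // Hij; rewrite !ordE //.
Qed.

Lemma ReS_lin (X Y : 'M[R]_6) a i j : ReS (X + a *: Y) i j = ReS X i j + a * ReS Y i j.
Proof. rewrite /ReS mulr_sumr -big_split /=; apply: eq_bigr => k _; rewrite !mxE; ring. Qed.
Lemma ImS_lin (X Y : 'M[R]_6) a i j : ImS (X + a *: Y) i j = ImS X i j + a * ImS Y i j.
Proof. rewrite /ImS mulr_sumr -big_split /=; apply: eq_bigr => k _; rewrite !mxE; ring. Qed.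

Lemma dc_comb (X Y : 'M[R]_6) a : defect_cond (D6_1 c) X -> defect_cond (D6_1 c) Y ->
  defect_cond (D6_1 c) (X + a *: Y).
Proof.
move=> /defect_iff [x1 x2 x3] /defect_iff [y1 y2 y3]; apply/defect_iff; split.
- by move=> i k k0; rewrite !mxE x1 // y1 // mulr0 addr0.
- by move=> i j i0 j1; rewrite !mxE x2 // y2 // mulr0 addr0.
- move=> i j ij; rewrite ReS_lin ImS_lin.
  by have [-> ->] := x3 _ _ ij; have [-> ->] := y3 _ _ ij; rewrite mulr0 addr0.
Qed.

Lemma dc0 : defect_cond (D6_1 c) 0.
Proof.
apply/defect_iff; split => [i k _| i j _ _| i j _]; rewrite ?mxE //.
by rewrite /ReS /ImS !big1 // => k _; rewrite !mxE subrr mulr0.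
Qed.

Lemma dc_add (X Y : 'M[R]_6) : defect_cond (D6_1 c) X -> defect_cond (D6_1 c) Y ->
  defect_cond (D6_1 c) (X + Y).
Proof. by move=> hX hY; have := dc_comb 1 hX hY; rewrite scale1r. Qed.

Lemma dc_scale (X : 'M[R]_6) a : defect_cond (D6_1 c) X -> defect_cond (D6_1 c) (a *: X).
Proof. by move=> hX; have := dc_comb a dc0 hX; rewrite add0r. Qed.
Definition B1 : 'M[R]_6 := \matrix_(i, j) nth 0 (nth [::] [:: [:: 0; 0; 0; 0; 0; 0];
    [:: 0; 0; 0; 0; 0; 0];
    [:: 0; 0; 0; (1); (1); 0];
    [:: 0; 0; (- 1); 0; 0; (- 1)];
    [:: 0; 0; (- 1); 0; 0; (- 1)];
    [:: 0; 0; 0; (1); (1); 0]] i) j.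
Lemma B1_ok : defect_cond (D6_1 c) B1.
Proof.
apply/defect_iff; split.
- by move=> i k k0; rewrite /B1 mxE k0; case: i => [[|[|[|[|[|[|i]]]]]] Hi].
- by move=> i j i0 _; rewrite /B1 mxE i0; case: j => [[|[|[|[|[|[|j]]]]]] Hj].
- apply: all_pairs.
  + case: (eq_01 B1) => -> ->; rewrite /B1 !mxE !inordK //=; split.
      by apply: (circ_eq (L := 0)); ring.
    by apply: (circ_eq (L := 0)); ring.
  + case: (eq_02 B1) => -> ->; rewrite /B1 !mxE !inordK //=; split.
      by apply: (circ_eq (L := 0)); ring.
    by apply: (circ_eq (L := 0)); ring.
  + case: (eq_03 B1) => -> ->; rewrite /B1 !mxE !inordK //=; split.
      by apply: (circ_eq (L := 0)); ring.
    by apply: (circ_eq (L := 0)); ring.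
  + case: (eq_04 B1) => -> ->; rewrite /B1 !mxE !inordK //=; split.
      by apply: (circ_eq (L := 0)); ring.
    by apply: (circ_eq (L := 0)); ring.
  + case: (eq_05 B1) => -> ->; rewrite /B1 !mxE !inordK //=; split.
      by apply: (circ_eq (L := 0)); ring.
    by apply: (circ_eq (L := 0)); ring.
  + case: (eq_12 B1) => -> ->; rewrite /B1 !mxE !inordK //=; split.
      by apply: (circ_eq (L := 0)); ring.
    by apply: (circ_eq (L := 0)); ring.
  + case: (eq_13 B1) => -> ->; rewrite /B1 !mxE !inordK //=; split.
      by apply: (circ_eq (L := 0)); ring.
    by apply: (circ_eq (L := 0)); ring.
  + case: (eq_14 B1) => -> ->; rewrite /B1 !mxE !inordK //=; split.
      by apply: (circ_eq (L := 0)); ring.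
    by apply: (circ_eq (L := 0)); ring.
  + case: (eq_15 B1) => -> ->; rewrite /B1 !mxE !inordK //=; split.
      by apply: (circ_eq (L := 0)); ring.
    by apply: (circ_eq (L := 0)); ring.
  + case: (eq_23 B1) => -> ->; rewrite /B1 !mxE !inordK //=; split.
      by apply: (circ_eq (L := 0)); ring.
    by apply: (circ_eq (L := 0)); ring.
  + case: (eq_24 B1) => -> ->; rewrite /B1 !mxE !inordK //=; split.
      by apply: (circ_eq (L := 0)); ring.
    by apply: (circ_eq (L := 0)); ring.
  + case: (eq_25 B1) => -> ->; rewrite /B1 !mxE !inordK //=; split.
      by apply: (circ_eq (L := 0)); ring.
    by apply: (circ_eq (L := 0)); ring.
  + case: (eq_34 B1) => -> ->; rewrite /B1 !mxE !inordK //=; split.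
      by apply: (circ_eq (L := 0)); ring.
    by apply: (circ_eq (L := 0)); ring.
  + case: (eq_35 B1) => -> ->; rewrite /B1 !mxE !inordK //=; split.
      by apply: (circ_eq (L := 0)); ring.
    by apply: (circ_eq (L := 0)); ring.
  + case: (eq_45 B1) => -> ->; rewrite /B1 !mxE !inordK //=; split.
      by apply: (circ_eq (L := 0)); ring.
    by apply: (circ_eq (L := 0)); ring.
Qed.
Definition B2 : 'M[R]_6 := \matrix_(i, j) nth 0 (nth [::] [:: [:: 0; 0; 0; 0; 0; 0];
    [:: 0; 0; (- 1); 0; 0; (1)];
    [:: 0; (1); 0; (1); (1); (1)];
    [:: 0; 0; (- 1); (- si); (co); 0];
    [:: 0; 0; (- 1); (- co); (si); 0];
    [:: 0; (- 1); (- 1); 0; 0; 0]] i) j.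
Lemma B2_ok : defect_cond (D6_1 c) B2.
Proof.
apply/defect_iff; split.
- by move=> i k k0; rewrite /B2 mxE k0; case: i => [[|[|[|[|[|[|i]]]]]] Hi].
- by move=> i j i0 _; rewrite /B2 mxE i0; case: j => [[|[|[|[|[|[|j]]]]]] Hj].
- apply: all_pairs.
  + case: (eq_01 B2) => -> ->; rewrite /B2 !mxE !inordK //=; split.
      by apply: (circ_eq (L := 0)); ring.
    by apply: (circ_eq (L := 0)); ring.
  + case: (eq_02 B2) => -> ->; rewrite /B2 !mxE !inordK //=; split.
      by apply: (circ_eq (L := 0)); ring.
    by apply: (circ_eq (L := 0)); ring.
  + case: (eq_03 B2) => -> ->; rewrite /B2 !mxE !inordK //=; split.
      by apply: (circ_eq (L := 0)); ring.
    by apply: (circ_eq (L := 0)); ring.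
  + case: (eq_04 B2) => -> ->; rewrite /B2 !mxE !inordK //=; split.
      by apply: (circ_eq (L := 0)); ring.
    by apply: (circ_eq (L := 0)); ring.
  + case: (eq_05 B2) => -> ->; rewrite /B2 !mxE !inordK //=; split.
      by apply: (circ_eq (L := 0)); ring.
    by apply: (circ_eq (L := 0)); ring.
  + case: (eq_12 B2) => -> ->; rewrite /B2 !mxE !inordK //=; split.
      by apply: (circ_eq (L := 0)); ring.
    by apply: (circ_eq (L := 0)); ring.
  + case: (eq_13 B2) => -> ->; rewrite /B2 !mxE !inordK //=; split.
      by apply: (circ_eq (L := 0)); ring.
    by apply: (circ_eq (L := 0)); ring.
  + case: (eq_14 B2) => -> ->; rewrite /B2 !mxE !inordK //=; split.
      by apply: (circ_eq (L := 0)); ring.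
    by apply: (circ_eq (L := 0)); ring.
  + case: (eq_15 B2) => -> ->; rewrite /B2 !mxE !inordK //=; split.
      by apply: (circ_eq (L := 0)); ring.
    by apply: (circ_eq (L := 0)); ring.
  + case: (eq_23 B2) => -> ->; rewrite /B2 !mxE !inordK //=; split.
      by apply: (circ_eq (L := (1))); ring.
    by apply: (circ_eq (L := 0)); ring.
  + case: (eq_24 B2) => -> ->; rewrite /B2 !mxE !inordK //=; split.
      by apply: (circ_eq (L := (1))); ring.
    by apply: (circ_eq (L := 0)); ring.
  + case: (eq_25 B2) => -> ->; rewrite /B2 !mxE !inordK //=; split.
      by apply: (circ_eq (L := 0)); ring.
    by apply: (circ_eq (L := 0)); ring.
  + case: (eq_34 B2) => -> ->; rewrite /B2 !mxE !inordK //=; split.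
      by apply: (circ_eq (L := 0)); ring.
    by apply: (circ_eq (L := 0)); ring.
  + case: (eq_35 B2) => -> ->; rewrite /B2 !mxE !inordK //=; split.
      by apply: (circ_eq (L := (1))); ring.
    by apply: (circ_eq (L := 0)); ring.
  + case: (eq_45 B2) => -> ->; rewrite /B2 !mxE !inordK //=; split.
      by apply: (circ_eq (L := (1))); ring.
    by apply: (circ_eq (L := 0)); ring.
Qed.
Definition B3 : 'M[R]_6 := \matrix_(i, j) nth 0 (nth [::] [:: [:: 0; 0; 0; 0; 0; 0];
    [:: 0; 0; (1 + si - co); (- 1 + si - co); (1 + si - co); (- 1 + si - co)];
    [:: 0; (- 1 + si + co); (2%:R * si); (- 2%:R); 0; (- 1 + si - co)];
    [:: 0; (1 + si + co); (2%:R + 2%:R * si); (2%:R * si); (1 + si - co); (2%:R * si)];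
    [:: 0; (- 1 + si + co); (2%:R * si); (- 1 + si + co); 0; (2%:R * si)];
    [:: 0; (1 + si + co); (1 + si + co); 0; 0; 0]] i) j.
Lemma B3_ok : defect_cond (D6_1 c) B3.
Proof.
apply/defect_iff; split.
- by move=> i k k0; rewrite /B3 mxE k0; case: i => [[|[|[|[|[|[|i]]]]]] Hi].
- by move=> i j i0 _; rewrite /B3 mxE i0; case: j => [[|[|[|[|[|[|j]]]]]] Hj].
- apply: all_pairs.
  + case: (eq_01 B3) => -> ->; rewrite /B3 !mxE !inordK //=; split.
      by apply: (circ_eq (L := 0)); ring.
    by apply: (circ_eq (L := 0)); ring.
  + case: (eq_02 B3) => -> ->; rewrite /B3 !mxE !inordK //=; split.
      by apply: (circ_eq (L := 0)); ring.
    by apply: (circ_eq (L := 0)); ring.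
  + case: (eq_03 B3) => -> ->; rewrite /B3 !mxE !inordK //=; split.
      by apply: (circ_eq (L := 0)); ring.
    by apply: (circ_eq (L := 0)); ring.
  + case: (eq_04 B3) => -> ->; rewrite /B3 !mxE !inordK //=; split.
      by apply: (circ_eq (L := 0)); ring.
    by apply: (circ_eq (L := 0)); ring.
  + case: (eq_05 B3) => -> ->; rewrite /B3 !mxE !inordK //=; split.
      by apply: (circ_eq (L := 0)); ring.
    by apply: (circ_eq (L := 0)); ring.
  + case: (eq_12 B3) => -> ->; rewrite /B3 !mxE !inordK //=; split.
      by apply: (circ_eq (L := 0)); ring.
    by apply: (circ_eq (L := 0)); ring.
  + case: (eq_13 B3) => -> ->; rewrite /B3 !mxE !inordK //=; split.
      by apply: (circ_eq (L := 0)); ring.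
    by apply: (circ_eq (L := 0)); ring.
  + case: (eq_14 B3) => -> ->; rewrite /B3 !mxE !inordK //=; split.
      by apply: (circ_eq (L := 0)); ring.
    by apply: (circ_eq (L := 0)); ring.
  + case: (eq_15 B3) => -> ->; rewrite /B3 !mxE !inordK //=; split.
      by apply: (circ_eq (L := 0)); ring.
    by apply: (circ_eq (L := 0)); ring.
  + case: (eq_23 B3) => -> ->; rewrite /B3 !mxE !inordK //=; split.
      by apply: (circ_eq (L := (- 2%:R))); ring.
    by apply: (circ_eq (L := 0)); ring.
  + case: (eq_24 B3) => -> ->; rewrite /B3 !mxE !inordK //=; split.
      by apply: (circ_eq (L := 0)); ring.
    by apply: (circ_eq (L := 0)); ring.
  + case: (eq_25 B3) => -> ->; rewrite /B3 !mxE !inordK //=; split.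
      by apply: (circ_eq (L := 0)); ring.
    by apply: (circ_eq (L := 0)); ring.
  + case: (eq_34 B3) => -> ->; rewrite /B3 !mxE !inordK //=; split.
      by apply: (circ_eq (L := 0)); ring.
    by apply: (circ_eq (L := 0)); ring.
  + case: (eq_35 B3) => -> ->; rewrite /B3 !mxE !inordK //=; split.
      by apply: (circ_eq (L := 0)); ring.
    by apply: (circ_eq (L := 0)); ring.
  + case: (eq_45 B3) => -> ->; rewrite /B3 !mxE !inordK //=; split.
      by apply: (circ_eq (L := (- 2%:R))); ring.
    by apply: (circ_eq (L := 0)); ring.
Qed.
Definition B4 : 'M[R]_6 := \matrix_(i, j) nth 0 (nth [::] [:: [:: 0; 0; 0; 0; 0; 0];
    [:: 0; 0; 0; (1); (- 1); 0];
    [:: 0; 0; (- si); (1); 0; (co)];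
    [:: 0; (- 1); (- 1); 0; (- 1); (- 1)];
    [:: 0; (1); 0; (1); 0; 0];
    [:: 0; 0; (- co); (1); 0; (si)]] i) j.
Lemma B4_ok : defect_cond (D6_1 c) B4.
Proof.
apply/defect_iff; split.
- by move=> i k k0; rewrite /B4 mxE k0; case: i => [[|[|[|[|[|[|i]]]]]] Hi].
- by move=> i j i0 _; rewrite /B4 mxE i0; case: j => [[|[|[|[|[|[|j]]]]]] Hj].
- apply: all_pairs.
  + case: (eq_01 B4) => -> ->; rewrite /B4 !mxE !inordK //=; split.
      by apply: (circ_eq (L := 0)); ring.
    by apply: (circ_eq (L := 0)); ring.
  + case: (eq_02 B4) => -> ->; rewrite /B4 !mxE !inordK //=; split.
      by apply: (circ_eq (L := 0)); ring.
    by apply: (circ_eq (L := 0)); ring.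
  + case: (eq_03 B4) => -> ->; rewrite /B4 !mxE !inordK //=; split.
      by apply: (circ_eq (L := 0)); ring.
    by apply: (circ_eq (L := 0)); ring.
  + case: (eq_04 B4) => -> ->; rewrite /B4 !mxE !inordK //=; split.
      by apply: (circ_eq (L := 0)); ring.
    by apply: (circ_eq (L := 0)); ring.
  + case: (eq_05 B4) => -> ->; rewrite /B4 !mxE !inordK //=; split.
      by apply: (circ_eq (L := 0)); ring.
    by apply: (circ_eq (L := 0)); ring.
  + case: (eq_12 B4) => -> ->; rewrite /B4 !mxE !inordK //=; split.
      by apply: (circ_eq (L := 0)); ring.
    by apply: (circ_eq (L := 0)); ring.
  + case: (eq_13 B4) => -> ->; rewrite /B4 !mxE !inordK //=; split.
      by apply: (circ_eq (L := 0)); ring.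
    by apply: (circ_eq (L := 0)); ring.
  + case: (eq_14 B4) => -> ->; rewrite /B4 !mxE !inordK //=; split.
      by apply: (circ_eq (L := 0)); ring.
    by apply: (circ_eq (L := 0)); ring.
  + case: (eq_15 B4) => -> ->; rewrite /B4 !mxE !inordK //=; split.
      by apply: (circ_eq (L := 0)); ring.
    by apply: (circ_eq (L := 0)); ring.
  + case: (eq_23 B4) => -> ->; rewrite /B4 !mxE !inordK //=; split.
      by apply: (circ_eq (L := (1))); ring.
    by apply: (circ_eq (L := 0)); ring.
  + case: (eq_24 B4) => -> ->; rewrite /B4 !mxE !inordK //=; split.
      by apply: (circ_eq (L := (- 1))); ring.
    by apply: (circ_eq (L := 0)); ring.
  + case: (eq_25 B4) => -> ->; rewrite /B4 !mxE !inordK //=; split.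
      by apply: (circ_eq (L := 0)); ring.
    by apply: (circ_eq (L := 0)); ring.
  + case: (eq_34 B4) => -> ->; rewrite /B4 !mxE !inordK //=; split.
      by apply: (circ_eq (L := 0)); ring.
    by apply: (circ_eq (L := 0)); ring.
  + case: (eq_35 B4) => -> ->; rewrite /B4 !mxE !inordK //=; split.
      by apply: (circ_eq (L := (- 1))); ring.
    by apply: (circ_eq (L := 0)); ring.
  + case: (eq_45 B4) => -> ->; rewrite /B4 !mxE !inordK //=; split.
      by apply: (circ_eq (L := (1))); ring.
    by apply: (circ_eq (L := 0)); ring.
Qed.

Lemma pos_zero (p y : R) : 0 < p -> p * y = 0 -> y = 0.
Proof. by move=> hp /eqP; rewrite mulf_eq0 gt_eqF //= => /eqP. Qed.

Lemma lc2 (r1 r2 a b L P : R) : r1 = 0 -> r2 = 0 ->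
  P - (a * r1 + b * r2) = (co ^+ 2 + si ^+ 2 - 1) * L -> P = 0.
Proof. by move=> -> ->; rewrite !mulr0 addr0 => h; apply: circ_eq; rewrite h. Qed.

Lemma pos1 : 0 < 1 + 2 * co ^+ 2 + 2 * si * co.
Proof. have := cos2Dsin2 c; have := sqr_ge0 (2 * co + si); have := sqr_ge0 co; nra. Qed.
Lemma pos2 : 0 < 1 + 4 * co ^+ 2.
Proof. have := sqr_ge0 co; nra. Qed.

Lemma homog (Y : 'M[R]_6) : defect_cond (D6_1 c) Y ->
  Y (inord 2) (inord 3) = 0 -> Y (inord 2) (inord 4) = 0 ->
  Y (inord 5) (inord 3) = 0 -> Y (inord 5) (inord 4) = 0 ->
  forall a b, (a < 6)%N -> (b < 6)%N -> Y (inord a) (inord b) = 0.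
Proof.
move=> /defect_iff [hc hr hp] z23 z24 z53 z54.
have z00 : Y (inord 0) (inord 0) = 0 by apply: hc; rewrite inordK.
have z10 : Y (inord 1) (inord 0) = 0 by apply: hc; rewrite inordK.
have z20 : Y (inord 2) (inord 0) = 0 by apply: hc; rewrite inordK.
have z30 : Y (inord 3) (inord 0) = 0 by apply: hc; rewrite inordK.
have z40 : Y (inord 4) (inord 0) = 0 by apply: hc; rewrite inordK.
have z50 : Y (inord 5) (inord 0) = 0 by apply: hc; rewrite inordK.
have z01 : Y (inord 0) (inord 1) = 0 by apply: hr; rewrite inordK.
have z02 : Y (inord 0) (inord 2) = 0 by apply: hr; rewrite inordK.
have z03 : Y (inord 0) (inord 3) = 0 by apply: hr; rewrite inordK.
have z04 : Y (inord 0) (inord 4) = 0 by apply: hr; rewrite inordK.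
have z05 : Y (inord 0) (inord 5) = 0 by apply: hr; rewrite inordK.
have := hp (inord 0) (inord 1); rewrite !inordK //; case: (eq_01 Y) => -> -> /(_ isT) [e01r e01i].
have := hp (inord 0) (inord 2); rewrite !inordK //; case: (eq_02 Y) => -> -> /(_ isT) [e02r e02i].
have := hp (inord 0) (inord 3); rewrite !inordK //; case: (eq_03 Y) => -> -> /(_ isT) [e03r e03i].
have := hp (inord 0) (inord 4); rewrite !inordK //; case: (eq_04 Y) => -> -> /(_ isT) [e04r e04i].
have := hp (inord 0) (inord 5); rewrite !inordK //; case: (eq_05 Y) => -> -> /(_ isT) [e05r e05i].
have := hp (inord 1) (inord 2); rewrite !inordK //; case: (eq_12 Y) => -> -> /(_ isT) [e12r e12i].
have := hp (inord 1) (inord 3); rewrite !inordK //; case: (eq_13 Y) => -> -> /(_ isT) [e13r e13i].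
have := hp (inord 1) (inord 4); rewrite !inordK //; case: (eq_14 Y) => -> -> /(_ isT) [e14r e14i].
have := hp (inord 1) (inord 5); rewrite !inordK //; case: (eq_15 Y) => -> -> /(_ isT) [e15r e15i].
have := hp (inord 2) (inord 3); rewrite !inordK //; case: (eq_23 Y) => -> -> /(_ isT) [e23r e23i].
have := hp (inord 2) (inord 4); rewrite !inordK //; case: (eq_24 Y) => -> -> /(_ isT) [e24r e24i].
have := hp (inord 2) (inord 5); rewrite !inordK //; case: (eq_25 Y) => -> -> /(_ isT) [e25r e25i].
have := hp (inord 3) (inord 4); rewrite !inordK //; case: (eq_34 Y) => -> -> /(_ isT) [e34r e34i].
have := hp (inord 3) (inord 5); rewrite !inordK //; case: (eq_35 Y) => -> -> /(_ isT) [e35r e35i].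
have := hp (inord 4) (inord 5); rewrite !inordK //; case: (eq_45 Y) => -> -> /(_ isT) [e45r e45i].
rewrite ?z00 ?z10 ?z20 ?z30 ?z40 ?z50 ?z01 ?z02 ?z03 ?z04 ?z05 ?z23 ?z24 ?z53 ?z54 in e01r e01i e02r e02i e03r e03i e04r e04i e05r e05i e12r e12i e13r e13i e14r e14i e15r e15i e23r e23i e24r e24i e25r e25i e34r e34i e35r e35i e45r e45i.
have z11 : Y (inord 1) (inord 1) = 0 by clear -e01r; lra.
have z22 : Y (inord 2) (inord 2) = 0 by clear -e02r; lra.
have z55 : Y (inord 5) (inord 5) = 0 by clear -e05r; lra.
rewrite ?z11 ?z22 ?z55 in e01r e01i e02r e02i e03r e03i e04r e04i e05r e05i e12r e12i e13r e13i e14r e14i e15r e15i e23r e23i e24r e24i e25r e25i e34r e34i e35r e35i e45r e45i.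
have z21 : Y (inord 2) (inord 1) = 0 by clear -e02i e05i e25r e25i; lra.
have z25 : Y (inord 2) (inord 5) = 0 by clear -e02i e05i e25r e25i; lra.
have z51 : Y (inord 5) (inord 1) = 0 by clear -e02i e05i e25r e25i; lra.
have z52 : Y (inord 5) (inord 2) = 0 by clear -e02i e05i e25r e25i; lra.
rewrite ?z21 ?z25 ?z51 ?z52 in e01r e01i e02r e02i e03r e03i e04r e04i e05r e05i e12r e12i e13r e13i e14r e14i e15r e15i e23r e23i e24r e24i e25r e25i e34r e34i e35r e35i e45r e45i.
have A3 : (co) * Y (inord 3) (inord 1) + (1) * Y (inord 3) (inord 4) + (- 1) * Y (inord 3) (inord 5) = 0.
  by apply: (lc2 (a := (co)) (b := (si)) (L := (- 1) * Y (inord 3) (inord 4) + (1) * Y (inord 3) (inord 5)) e23r e23i); ring.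
have B3 : (- si) * Y (inord 3) (inord 1) + (- 1) * Y (inord 3) (inord 2) + (1) * Y (inord 3) (inord 3) = 0.
  by apply: (lc2 (a := (- si)) (b := (co)) (L := (1) * Y (inord 3) (inord 2) + (- 1) * Y (inord 3) (inord 3)) e23r e23i); ring.
have C3 : (- co) * Y (inord 3) (inord 1) + (- 1) * Y (inord 3) (inord 2) + (1) * Y (inord 3) (inord 4) = 0.
  by apply: (lc2 (a := (co)) (b := (- si)) (L := (1) * Y (inord 3) (inord 2) + (- 1) * Y (inord 3) (inord 4)) e35r e35i); ring.
have D3 : (- si) * Y (inord 3) (inord 1) + (- 1) * Y (inord 3) (inord 3) + (1) * Y (inord 3) (inord 5) = 0.
  by apply: (lc2 (a := (si)) (b := (co)) (L := (1) * Y (inord 3) (inord 3) + (- 1) * Y (inord 3) (inord 5)) e35r e35i); ring.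
have A4 : (co) * Y (inord 4) (inord 1) + (- 1) * Y (inord 4) (inord 3) + (1) * Y (inord 4) (inord 5) = 0.
  by apply: (lc2 (a := (co)) (b := (si)) (L := (1) * Y (inord 4) (inord 3) + (- 1) * Y (inord 4) (inord 5)) e24r e24i); ring.
have B4 : (- si) * Y (inord 4) (inord 1) + (1) * Y (inord 4) (inord 2) + (- 1) * Y (inord 4) (inord 4) = 0.
  by apply: (lc2 (a := (- si)) (b := (co)) (L := (- 1) * Y (inord 4) (inord 2) + (1) * Y (inord 4) (inord 4)) e24r e24i); ring.
have C4 : (- co) * Y (inord 4) (inord 1) + (1) * Y (inord 4) (inord 2) + (- 1) * Y (inord 4) (inord 3) = 0.
  by apply: (lc2 (a := (co)) (b := (- si)) (L := (- 1) * Y (inord 4) (inord 2) + (1) * Y (inord 4) (inord 3)) e45r e45i); ring.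
have D4 : (- si) * Y (inord 4) (inord 1) + (1) * Y (inord 4) (inord 4) + (- 1) * Y (inord 4) (inord 5) = 0.
  by apply: (lc2 (a := (si)) (b := (co)) (L := (- 1) * Y (inord 4) (inord 4) + (1) * Y (inord 4) (inord 5)) e45r e45i); ring.
have d3 : Y (inord 3) (inord 2) - Y (inord 3) (inord 5) = -2 * co * Y (inord 3) (inord 1) by clear -A3 C3; lra.
have e3 : Y (inord 3) (inord 1) = (si + co) * (Y (inord 3) (inord 2) - Y (inord 3) (inord 5)) by clear -A3 B3 C3 D3 e03r e03i; lra.
rewrite d3 in e3.
have m3 : (1 + 2 * co ^+ 2 + 2 * si * co) * Y (inord 3) (inord 1) = 0 by clear -e3; lra.
have z31 := pos_zero pos1 m3.
rewrite ?z31 in e01r e01i e02r e02i e03r e03i e04r e04i e05r e05i e12r e12i e13r e13i e14r e14i e15r e15i e23r e23i e24r e24i e25r e25i e34r e34i e35r e35i e45r e45i A3 B3 C3 D3 A4 B4 C4 D4.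
have q35 : Y (inord 3) (inord 5) = Y (inord 3) (inord 2) by clear -A3 C3; lra.
rewrite ?q35 in e01r e01i e02r e02i e03r e03i e04r e04i e05r e05i e12r e12i e13r e13i e14r e14i e15r e15i e23r e23i e24r e24i e25r e25i e34r e34i e35r e35i e45r e45i A3 B3 C3 D3 A4 B4 C4 D4.
have z33 : Y (inord 3) (inord 3) = 0 by clear -e03r; lra.
have z34 : Y (inord 3) (inord 4) = 0 by clear -e03i; lra.
rewrite ?z33 ?z34 in e01r e01i e02r e02i e03r e03i e04r e04i e05r e05i e12r e12i e13r e13i e14r e14i e15r e15i e23r e23i e24r e24i e25r e25i e34r e34i e35r e35i e45r e45i A3 B3 C3 D3 A4 B4 C4 D4.
have z32 : Y (inord 3) (inord 2) = 0 by clear -B3; lra.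
have z35 : Y (inord 3) (inord 5) = 0 by rewrite q35 z32.
rewrite ?z32 in e01r e01i e02r e02i e03r e03i e04r e04i e05r e05i e12r e12i e13r e13i e14r e14i e15r e15i e23r e23i e24r e24i e25r e25i e34r e34i e35r e35i e45r e45i A3 B3 C3 D3 A4 B4 C4 D4.
have d4 : Y (inord 4) (inord 2) - Y (inord 4) (inord 5) = 2 * co * Y (inord 4) (inord 1) by clear -A4 C4; lra.
have e4 : Y (inord 4) (inord 1) = - (si + co) * (Y (inord 4) (inord 2) - Y (inord 4) (inord 5)) by clear -A4 B4 C4 D4 e04r e04i; lra.
rewrite d4 in e4.
have m4 : (1 + 2 * co ^+ 2 + 2 * si * co) * Y (inord 4) (inord 1) = 0 by clear -e4; lra.
have z41 := pos_zero pos1 m4.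
rewrite ?z41 in e01r e01i e02r e02i e03r e03i e04r e04i e05r e05i e12r e12i e13r e13i e14r e14i e15r e15i e23r e23i e24r e24i e25r e25i e34r e34i e35r e35i e45r e45i A3 B3 C3 D3 A4 B4 C4 D4.
have q45 : Y (inord 4) (inord 5) = Y (inord 4) (inord 2) by clear -A4 C4; lra.
rewrite ?q45 in e01r e01i e02r e02i e03r e03i e04r e04i e05r e05i e12r e12i e13r e13i e14r e14i e15r e15i e23r e23i e24r e24i e25r e25i e34r e34i e35r e35i e45r e45i A3 B3 C3 D3 A4 B4 C4 D4.
have z44 : Y (inord 4) (inord 4) = 0 by clear -e04r; lra.
have z43 : Y (inord 4) (inord 3) = 0 by clear -e04i; lra.
rewrite ?z44 ?z43 in e01r e01i e02r e02i e03r e03i e04r e04i e05r e05i e12r e12i e13r e13i e14r e14i e15r e15i e23r e23i e24r e24i e25r e25i e34r e34i e35r e35i e45r e45i A3 B3 C3 D3 A4 B4 C4 D4.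
have z42 : Y (inord 4) (inord 2) = 0 by clear -B4; lra.
have z45 : Y (inord 4) (inord 5) = 0 by rewrite q45 z42.
rewrite ?z42 in e01r e01i e02r e02i e03r e03i e04r e04i e05r e05i e12r e12i e13r e13i e14r e14i e15r e15i e23r e23i e24r e24i e25r e25i e34r e34i e35r e35i e45r e45i A3 B3 C3 D3 A4 B4 C4 D4.
have g1 : Y (inord 1) (inord 3) - Y (inord 1) (inord 4) = -2 * co * (Y (inord 1) (inord 2) - Y (inord 1) (inord 5)) by clear -e13r e14r; lra.
have g2 : Y (inord 1) (inord 2) - Y (inord 1) (inord 5) = 2 * co * (Y (inord 1) (inord 3) - Y (inord 1) (inord 4)) by clear -e15r e12r; lra.
rewrite g2 in g1.
have m1 : (1 + 4 * co ^+ 2) * (Y (inord 1) (inord 3) - Y (inord 1) (inord 4)) = 0 by clear -g1; lra.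
have g3 := pos_zero pos2 m1.
have q14 : Y (inord 1) (inord 4) = Y (inord 1) (inord 3) by clear -g3; lra.
rewrite ?q14 in e01r e01i e02r e02i e03r e03i e04r e04i e05r e05i e12r e12i e13r e13i e14r e14i e15r e15i e23r e23i e24r e24i e25r e25i e34r e34i e35r e35i e45r e45i A3 B3 C3 D3 A4 B4 C4 D4.
have z13 : Y (inord 1) (inord 3) = 0 by clear -e13r e14r; lra.
have z14 : Y (inord 1) (inord 4) = 0 by rewrite q14 z13.
rewrite ?z13 in e01r e01i e02r e02i e03r e03i e04r e04i e05r e05i e12r e12i e13r e13i e14r e14i e15r e15i e23r e23i e24r e24i e25r e25i e34r e34i e35r e35i e45r e45i A3 B3 C3 D3 A4 B4 C4 D4.
have z12 : Y (inord 1) (inord 2) = 0 by clear -e15r; lra.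
have z15 : Y (inord 1) (inord 5) = 0 by clear -e12r; lra.
by case=> [|[|[|[|[|[|a]]]]]] [|[|[|[|[|[|b]]]]]] //= _ _; first [ exact: z00 | exact: z01 | exact: z02 | exact: z03 | exact: z04 | exact: z05 | exact: z10 | exact: z11 | exact: z12 | exact: z13 | exact: z14 | exact: z15 | exact: z20 | exact: z21 | exact: z22 | exact: z23 | exact: z24 | exact: z25 | exact: z30 | exact: z31 | exact: z32 | exact: z33 | exact: z34 | exact: z35 | exact: z40 | exact: z41 | exact: z42 | exact: z43 | exact: z44 | exact: z45 | exact: z50 | exact: z51 | exact: z52 | exact: z53 | exact: z54 | exact: z55 ].
Qed.

Definition bt : 4.-tuple 'M[R]_6 := [tuple B1; B2; B3; B4].

Lemma sum4 (V : zmodType) (F : 'I_4 -> V) :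
  \sum_(k < 4) F k = F (inord 0) + F (inord 1) + F (inord 2) + F (inord 3).
Proof.
rewrite !big_ord_recl big_ord0 addr0 !addrA.
by repeat congr (_ + _); congr F; apply/val_inj; rewrite /= inordK.
Qed.

Lemma bt_free : free bt.
Proof.
apply/freeP => k hk.
have e a b : (\sum_(i < 4) k i *: bt`_i) (inord a) (inord b) = 0 by rewrite hk mxE.
have := e 2 3; have := e 2 4; have := e 5 3; have := e 5 4.
rewrite !summxE !sum4 !mxE !inordK //= /B1 /B2 /B3 /B4 !mxE !inordK //= => h1 h2 h3 h4.
move=> i; rewrite -(inord_val i); case: i => [[|[|[|[|i]]]] Hi] //=; lra.
Qed.

Lemma bt_ok (i : 'I_4) : defect_cond (D6_1 c) bt`_i.
Proof.
case: i => [[|[|[|[|i]]]] Hi] //=; [exact: B1_ok | exact: B2_ok | exact: B3_ok | exact: B4_ok].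
Qed.

Lemma span_iff (X : 'M[R]_6) : defect_cond (D6_1 c) X <-> X \in <<bt>>%VS.
Proof.
split=> [hX | hX]; last first.
  rewrite (coord_span hX); apply: (big_ind (fun M => defect_cond (D6_1 c) M)).
  - exact: dc0.
  - exact: dc_add.
  - by move=> i _; apply: dc_scale; apply: bt_ok.
pose S := (X (inord 5) (inord 4) *: B1 + (X (inord 2) (inord 4) - X (inord 5) (inord 4)) *: B2 + ((X (inord 2) (inord 4) + X (inord 5) (inord 3) - X (inord 5) (inord 4) - X (inord 2) (inord 3)) / 2%:R) *: B3 + (X (inord 5) (inord 3) - X (inord 5) (inord 4)) *: B4).
have hS : defect_cond (D6_1 c) S.
  by apply: dc_add; [apply: dc_add; [apply: dc_add|]|]; apply: dc_scale;
    [exact: B1_ok | exact: B2_ok | exact: B3_ok | exact: B4_ok].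
have hZ := dc_comb (-1) hX hS.
have Z0 := homog hZ.
have E a b : (X + (-1) *: S) (inord a) (inord b) =
   X (inord a) (inord b) - S (inord a) (inord b) by rewrite !mxE mulN1r.
have SE a b : S (inord a) (inord b) = X (inord 5) (inord 4) * B1 (inord a) (inord b) + (X (inord 2) (inord 4) - X (inord 5) (inord 4)) * B2 (inord a) (inord b) + ((X (inord 2) (inord 4) + X (inord 5) (inord 3) - X (inord 5) (inord 4) - X (inord 2) (inord 3)) / 2%:R) * B3 (inord a) (inord b) + (X (inord 5) (inord 3) - X (inord 5) (inord 4)) * B4 (inord a) (inord b)
  by rewrite /S !mxE.
rewrite !E !SE /B1 /B2 /B3 /B4 !mxE !inordK //= in Z0.
have Z1 := Z0 ltac:(lra) ltac:(lra) ltac:(lra) ltac:(lra).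
have XS : X = S.
  apply/matrixP => i j; apply/eqP; rewrite -subr_eq0; apply/eqP.
  rewrite -(inord_val i) -(inord_val j).
  by have := Z1 i j (ltn_ord i) (ltn_ord j); rewrite !E.
rewrite XS /S; repeat apply: rpredD; apply: rpredZ; apply: memv_span;
  by rewrite /bt /= !inE eqxx ?orbT.
Qed.

End Work.

Unset Implicit Arguments.

Theorem mainTheorem2 (R : realType) (c : R) : has_defect (D6_1 c) 4.
Proof. by exists (bt c); split; [exact: bt_free | move=> X; exact: span_iff]. Qed.
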